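(* Let $X$ be a continuum that is $d(X)$-Baire. Then the union of any nest (family totally ordered by inclusion) of closed nowhere dense subsets of $X$ is not equal to $X$.
   Context: A continuum is a nondegenerate compact connected Hausdorff space. $d(X)$ is the least cardinality of a dense subset of $X$; $X$ is $\alpha$-Baire if every family of $\alpha$ many open dense subsets of $X$ has dense intersection. *)

(* Defs.v *)
From HB Require Import structures.
From mathcomp Require Import all_boot all_order all_algebra.
From mathcomp Require Import all_classical all_reals all_analysis.
Set Implicit Arguments. Unset Strict Implicit. Unset Printing Implicit Defensive.
Local Open Scope classical_set_scope.

Definition continuum (X : topologicalType) : Prop :=
  [/\ hausdorff_space X, compact [set: X], connected [set: X] &
      exists x y : X, x <> y].

(* D realizes the density d(X): D is dense and has least cardinality
   among dense subsets of X. *)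
Definition density_set (X : topologicalType) (D : set X) : Prop :=
  dense D /\ forall D' : set X, dense D' -> (D #<= D')%card.

(* X is kappa-Baire where kappa = |K|: every family of open dense sets
   indexed by the elements of K has dense intersection. *)
Definition card_Baire (X : topologicalType) (T : Type) (K : set T) : Prop :=
  forall F : T -> set X, (forall k, K k -> open (F k) /\ dense (F k)) ->
    dense (\bigcap_(k in K) F k).

Definition dX_Baire (X : topologicalType) : Prop :=
  exists D : set X, density_set D /\ card_Baire X D.

Definition nest (X : Type) (N : set (set X)) : Prop :=
  forall A B, N A -> N B -> A `<=` B \/ B `<=` A.

Definition nowhere_dense (X : topologicalType) (A : set X) : Prop :=
  (closure A)^° = set0.

(* Main.v *)
Require Import Defs.
From HB Require Import structures.
From mathcomp Require Import all_boot all_order all_algebra.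
From mathcomp Require Import all_classical all_reals all_analysis.
Local Open Scope classical_set_scope.

Lemma cnd_compl_open_dense (X : topologicalType) (A : set X) :
  closed A -> nowhere_dense A -> open (~` A) /\ dense (~` A).
Proof.
move=> cA ndA; split; first by rewrite openC.
move=> O [x Ox] oO.
apply/set0P/negP => /eqP H.
have OA : O `<=` closure A.
  move=> y Oy; apply: subset_closure.
  apply: contrapT => nAy.
  have : (O `&` ~` A) y by [].
  by rewrite H.
move: OA; rewrite (open_subsetE _ oO) => OA.
have := OA x Ox; by rewrite /nowhere_dense in ndA; rewrite ndA.
Qed.

Theorem mainTheorem5 (X : topologicalType) (N : set (set X)) :
  continuum X -> dX_Baire X -> nest N ->
  (forall A, N A -> closed A /\ nowhere_dense A) ->
  \bigcup_(A in N) A <> [set: X].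
Proof.
move=> [_ _ _ [x0 [y0 _]]] [D [[dD _] BD]] nN hN UX.
have ex : forall d : X, exists A : set X, D d -> N A /\ A d.
  move=> d; have : (\bigcup_(A in N) A) d by rewrite UX.
  by move=> [A NA Ad]; exists A.
have [F hF] := choice ex.
have cod : forall A, N A -> open (~` A) /\ dense (~` A).
  by move=> A /hN [cA ndA]; apply: cnd_compl_open_dense.
have [[A NA sub]|nc] := pselect (exists2 A, N A & forall d, D d -> F d `<=` A).
  have [_ dA] := cod A NA.
  have [x [_ nAx]] := dA setT (ex_intro _ x0 I) openT.
  have [y [nAy Dy]] := dD _ (ex_intro _ x nAx) (proj1 (cod A NA)).
  exfalso; exact: nAy (sub y Dy y (proj2 (hF y Dy))).
have : dense (\bigcap_(d in D) ~` F d).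
  apply: BD => d Dd; exact: cod (proj1 (hF d Dd)).
move=> /(_ setT (ex_intro _ x0 I) openT) [z [_ Gx]].
have : (\bigcup_(A in N) A) z by rewrite UX.
move=> [A NA Az].
apply: nc; exists A => // d Dd.
case: (nN _ _ NA (proj1 (hF d Dd))) => // AF.
exfalso; exact: (Gx d Dd (AF z Az)).
Qed.
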